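(* Let $C$ be a d-cone and let $C^*$ be the cone of all Scott-continuous linear functionals $\mu\colon C\to\overline{\mathbb{R}}_+$ (with pointwise operations), endowed with the weak$^*$ upper topology. Let $C_0$ be a d-dense subcone of $C$. Then for every sublinear functional $\varphi\colon C^*\to\overline{\mathbb{R}}_+$ which is lower semicontinuous with respect to the weak$^*$ upper topology and every $\mu\in C^*$, \[\varphi(\mu)=\sup\{\mu(x)\mid x\in C_0,\ \widehat x\le\varphi\},\] where $\widehat x\le\varphi$ means $\nu(x)\le\varphi(\nu)$ for all $\nu\in C^*$.
   Context: $\overline{\mathbb{R}}_+=[0,+\infty)\cup\{+\infty\}$ with its usual order and extended arithmetic ($r+\infty=+\infty$, $r\cdot\infty=\infty$ for $r>0$, $0\cdot\infty=0$), with the upper topology (open sets $\emptyset$, $\overline{\mathbb{R}}_+$, $]r,+\infty]$ for $r\in[0,\infty)$); lower semicontinuous means continuous for it. A cone is a commutative monoid with a scalar multiplication by $[0,\infty)$ satisfying $r(x+y)=rx+ry$, $(r+s)x=rx+sx$, $(rs)x=r(sx)$, $1x=x$, $0x=0$. A d-cone is a cone with a directed complete partial order such that addition and scalar multiplication $[0,\infty)\times C\to C$ are Scott-continuous (order preserving and preserving suprema of directed families). A d-subcone is a subcone closed under directed suprema in $C$; a subcone $C_0$ is d-dense if the only d-subcone of $C$ containing $C_0$ is $C$. Linear = additive and homogeneous ($\mu(rx)=r\mu(x)$, $r\in[0,\infty)$); sublinear = homogeneous and subadditive. For $x\in C$, $\widehat x\colon C^*\to\overline{\mathbb{R}}_+$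 is $\widehat x(\mu)=\mu(x)$. The weak$^*$ upper topology on $C^*$ is the coarsest topology making every $\widehat x$, $x\in C$, lower semicontinuous. $\sup\emptyset=0$. *)

(* Defs.v *)
From Stdlib Require Import Reals List.
Open Scope R_scope.

Definition nnR := {r : R | 0 <= r}.
Definition nnval (r : nnR) : R := proj1_sig r.
Definition nn0 : nnR := exist _ 0 (Rle_refl 0).
Definition nn1 : nnR := exist _ 1 Rle_0_1.
Definition nn_add (r s : nnR) : nnR :=
  exist _ (nnval r + nnval s)
    (Rplus_le_le_0_compat _ _ (proj2_sig r) (proj2_sig s)).
Definition nn_mul (r s : nnR) : nnR :=
  exist _ (nnval r * nnval s) (Rmult_le_pos _ _ (proj2_sig r) (proj2_sig s)).
Definition nn_le (r s : nnR) : Prop := nnval r <= nnval s.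

Inductive ER : Type := ERfin (r : nnR) | ERinf.

Definition ER_le (x y : ER) : Prop :=
  match x, y with
  | ERfin r, ERfin s => nn_le r s
  | _, ERinf => True
  | ERinf, ERfin _ => False
  end.
Definition ER_lt (x y : ER) : Prop := ER_le x y /\ ~ ER_le y x.

Definition ER_add (x y : ER) : ER :=
  match x, y with
  | ERfin r, ERfin s => ERfin (nn_add r s)
  | _, _ => ERinf
  end.

(* r * x, with 0 * oo = 0 *)
Definition ER_scale (r : nnR) (x : ER) : ER :=
  match x with
  | ERfin s => ERfin (nn_mul r s)
  | ERinf => if Req_EM_T (nnval r) 0 then ERfin nn0 else ERinf
  end.

(* v is the supremum (least upper bound) of the set S in [0,+oo];
   note the sup of the empty set is 0 = least element. *)
Definition ER_is_sup (S : ER -> Prop) (v : ER) : Prop :=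
  (forall y, S y -> ER_le y v) /\
  (forall u, (forall y, S y -> ER_le y u) -> ER_le v u).

Definition directed {T : Type} (le : T -> T -> Prop) {I : Type} (f : I -> T) : Prop :=
  inhabited I /\ forall i j, exists k, le (f i) (f k) /\ le (f j) (f k).

Definition is_lub {T : Type} (le : T -> T -> Prop) {I : Type} (f : I -> T) (s : T) : Prop :=
  (forall i, le (f i) s) /\ (forall u, (forall i, le (f i) u) -> le s u).

Definition prod_le {A B : Type} (leA : A -> A -> Prop) (leB : B -> B -> Prop)
  (p q : A * B) : Prop := leA (fst p) (fst q) /\ leB (snd p) (snd q).

Definition scott_cont {A B : Type} (leA : A -> A -> Prop) (leB : B -> B -> Prop)
  (g : A -> B) : Prop :=
  (forall a a', leA a a' -> leB (g a) (g a')) /\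
  (forall (I : Type) (f : I -> A) (s : A),
      directed leA f -> is_lub leA f s -> is_lub leB (fun i => g (f i)) (g s)).

Record Cone : Type := {
  carrier :> Type;
  cadd : carrier -> carrier -> carrier;
  czero : carrier;
  csmul : nnR -> carrier -> carrier;
  cadd_assoc : forall x y z, cadd x (cadd y z) = cadd (cadd x y) z;
  cadd_comm : forall x y, cadd x y = cadd y x;
  cadd_0 : forall x, cadd czero x = x;
  csmul_addr : forall r x y, csmul r (cadd x y) = cadd (csmul r x) (csmul r y);
  csmul_addl : forall r s x, csmul (nn_add r s) x = cadd (csmul r x) (csmul s x);
  csmul_mul : forall r s x, csmul (nn_mul r s) x = csmul r (csmul s x);
  csmul_1 : forall x, csmul nn1 x = x;
  csmul_0 : forall x, csmul nn0 x = czero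
}.

Record DCone : Type := {
  dc_cone :> Cone;
  dle : dc_cone -> dc_cone -> Prop;
  dle_refl : forall x, dle x x;
  dle_trans : forall x y z, dle x y -> dle y z -> dle x z;
  dle_antisym : forall x y, dle x y -> dle y x -> x = y;
  d_complete : forall (I : Type) (f : I -> dc_cone),
      directed dle f -> exists s, is_lub dle f s;
  dadd_scott : scott_cont (prod_le dle dle) dle
                 (fun p : dc_cone * dc_cone => cadd dc_cone (fst p) (snd p));
  dsmul_scott : scott_cont (prod_le nn_le dle) dle
                 (fun p : nnR * dc_cone => csmul dc_cone (fst p) (snd p))
}.

Definition subcone (C : Cone) (P : C -> Prop) : Prop :=
  P (czero C) /\
  (forall x y, P x -> P y -> P (cadd C x y)) /\
  (forall r x, P x -> P (csmul C r x)).

Definition d_subcone (C : DCone) (P : C -> Prop) : Prop :=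
  subcone C P /\
  (forall (I : Type) (f : I -> C) (s : C),
      directed (dle C) f -> (forall i, P (f i)) -> is_lub (dle C) f s -> P s).

Definition d_dense (C : DCone) (P : C -> Prop) : Prop :=
  subcone C P /\
  (forall Q : C -> Prop, d_subcone C Q -> (forall x, P x -> Q x) -> forall x, Q x).

(** * The dual cone C^* (as a predicate on functionals C -> [0,+oo]) *)
Definition linear_fun (C : Cone) (mu : C -> ER) : Prop :=
  (forall x y, mu (cadd C x y) = ER_add (mu x) (mu y)) /\
  (forall r x, mu (csmul C r x) = ER_scale r (mu x)).

Definition in_dual (C : DCone) (mu : C -> ER) : Prop :=
  linear_fun C mu /\ scott_cont (dle C) ER_le mu.

(* Weak* upper topology on C^*: generated by the subbasic opens
   { mu | mu(x) in ]r,+oo] }, x in C, r in [0,+oo).  U (restricted to C^* )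
   is open iff each of its points has a basic neighbourhood (a finite
   intersection of subbasic opens) inside U. *)
Definition weak_open (C : DCone) (U : (C -> ER) -> Prop) : Prop :=
  forall mu, in_dual C mu -> U mu ->
    exists l : list (C * nnR),
      (forall p, In p l -> ER_lt (ERfin (snd p)) (mu (fst p))) /\
      (forall nu, in_dual C nu ->
         (forall p, In p l -> ER_lt (ERfin (snd p)) (nu (fst p))) -> U nu).

(* lower semicontinuity of phi : C^* -> [0,+oo] for the weak* upper topology:
   preimages of the opens ]r,+oo] are open (preimages of {} and of the whole
   space are trivially open). *)
Definition weak_lsc (C : DCone) (phi : (C -> ER) -> ER) : Prop :=
  forall r : nnR, weak_open C (fun mu => ER_lt (ERfin r) (phi mu)).

Definition sublinear_dual (C : DCone) (phi : (C -> ER) -> ER) : Prop :=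
  (forall (r : nnR) mu, in_dual C mu ->
      phi (fun x => ER_scale r (mu x)) = ER_scale r (phi mu)) /\
  (forall mu nu, in_dual C mu -> in_dual C nu ->
      ER_le (phi (fun x => ER_add (mu x) (nu x))) (ER_add (phi mu) (phi nu))).

(* Main.v *)
Require Import Defs.
From Stdlib Require Import Reals List Lra Psatz Classical ProofIrrelevance.
Require Import Defs.
Open Scope R_scope.

Lemma nn_ext (a b : nnR) : nnval a = nnval b -> a = b.
Proof. destruct a as [a ha], b as [b hb]; simpl; intros ->; f_equal; apply proof_irrelevance. Qed.

Lemma nnpos (a : nnR) : 0 <= nnval a. Proof. exact (proj2_sig a). Qed.

Definition nn_of (t : R) : nnR := exist _ (Rmax 0 t) (Rmax_l 0 t).
Arguments nn_of : simpl never.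
Lemma nn_of_val t : 0 <= t -> nnval (nn_of t) = t.
Proof. intros; unfold nn_of; simpl; apply Rmax_right; auto. Qed.

Ltac dER x := let r := fresh "r" in let h := fresh "h" in destruct x as [[r h]|].
Ltac er_unf := unfold ER_lt, ER_le, ER_add, ER_scale, nn_le, nn_add, nn_mul, nn0, nn1, nnval in *; simpl in *.
Ltac er_solve := repeat (match goal with |- context [Req_EM_T ?a ?b] => destruct (Req_EM_T a b) end; simpl);
  auto; try tauto; try lra; try (f_equal; apply nn_ext; simpl; nra); try (exfalso; nra).

Lemma ER_le_refl x : ER_le x x.
Proof. dER x; er_unf; lra. Qed.
Lemma ER_le_trans x y z : ER_le x y -> ER_le y z -> ER_le x z.
Proof. dER x; dER y; dER z; er_unf; intros; try lra; tauto. Qed.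
Lemma ER_le_total x y : ER_le x y \/ ER_le y x.
Proof. dER x; dER y; er_unf; try lra; tauto. Qed.
Lemma ER_le_antisym x y : ER_le x y -> ER_le y x -> x = y.
Proof. dER x; dER y; er_unf; intros; try tauto. f_equal; apply nn_ext; simpl; lra. Qed.
Lemma ER_not_le x y : ~ ER_le x y -> ER_lt y x.
Proof. intros H; split; auto. destruct (ER_le_total x y); tauto. Qed.
Lemma ER_lt_not_le x y : ER_lt x y -> ~ ER_le y x.
Proof. intros [_ H]; auto. Qed.
Lemma ER_lt_le x y : ER_lt x y -> ER_le x y.
Proof. intros [H _]; auto. Qed.
Lemma ER_lt_le_trans x y z : ER_lt x y -> ER_le y z -> ER_lt x z.
Proof. intros [H1 H2] H3; split. eapply ER_le_trans; eauto. intro H4; apply H2; eapply ER_le_trans; eauto. Qed.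
Lemma ER_le_lt_trans x y z : ER_le x y -> ER_lt y z -> ER_lt x z.
Proof. intros H1 [H2 H3]; split. eapply ER_le_trans; eauto. intro H4; apply H3; eapply ER_le_trans; eauto. Qed.
Lemma ER_le_inf x : ER_le x ERinf.
Proof. dER x; er_unf; auto. Qed.
Lemma ER_lt_irrefl x : ~ ER_lt x x.
Proof. intros [_ H]; apply H, ER_le_refl. Qed.

Lemma ER_add_comm x y : ER_add x y = ER_add y x.
Proof. dER x; dER y; er_unf; auto. f_equal; apply nn_ext; simpl; lra. Qed.
Lemma ER_add_assoc x y z : ER_add x (ER_add y z) = ER_add (ER_add x y) z.
Proof. dER x; dER y; dER z; er_unf; auto. f_equal; apply nn_ext; simpl; lra. Qed.
Lemma ER_add_mono x x' y y' : ER_le x x' -> ER_le y y' -> ER_le (ER_add x y) (ER_add x' y').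
Proof. dER x; dER x'; dER y; dER y'; er_unf; intros; try lra; tauto. Qed.
Lemma ER_add_inf_l x : ER_add ERinf x = ERinf. Proof. reflexivity. Qed.
Lemma ER_add_inf_r x : ER_add x ERinf = ERinf. Proof. dER x; reflexivity. Qed.

Lemma ER_scale_mono t x y : ER_le x y -> ER_le (ER_scale t x) (ER_scale t y).
Proof. destruct t as [t ht]; dER x; dER y; er_unf; intros; er_solve. all: try nra. Qed.
Lemma ER_scale_add t x y : ER_scale t (ER_add x y) = ER_add (ER_scale t x) (ER_scale t y).
Proof. destruct t as [t ht]; dER x; dER y; er_unf; er_solve. Qed.
Lemma ER_scale_comm t s x : ER_scale t (ER_scale s x) = ER_scale s (ER_scale t x).
Proof. destruct t as [t ht]; destruct s as [s hs]; dER x; er_unf; er_solve. Qed.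
Lemma ER_scale_inf t : 0 < nnval t -> ER_scale t ERinf = ERinf.
Proof. destruct t as [t ht]; er_unf; intros; destruct Req_EM_T; auto; lra. Qed.
Lemma ER_scale_zero t x : nnval t = 0 -> ER_scale t x = ERfin nn0.
Proof. destruct t as [t ht]; dER x; er_unf; intros; try (destruct Req_EM_T); auto.
  f_equal; apply nn_ext; simpl; subst; ring. lra. Qed.

Definition ER_min (x y : ER) : ER :=
  match x, y with
  | ERinf, _ => y
  | _, ERinf => x
  | ERfin r, ERfin s => if Rle_dec (nnval r) (nnval s) then x else y
  end.

Lemma min_le_l x y : ER_le (ER_min x y) x.
Proof. dER x; dER y; unfold ER_min; try (destruct Rle_dec); er_unf; try lra; auto. Qed.
Lemma min_le_r x y : ER_le (ER_min x y) y.
Proof. dER x; dER y; unfold ER_min; try (destruct Rle_dec); er_unf; try lra; auto. Qed.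
Lemma le_min z x y : ER_le z x -> ER_le z y -> ER_le z (ER_min x y).
Proof. dER x; dER y; unfold ER_min; try (destruct Rle_dec); auto. Qed.
Lemma lt_min z x y : ER_lt z x -> ER_lt z y -> ER_lt z (ER_min x y).
Proof. dER x; dER y; unfold ER_min; try (destruct Rle_dec); auto. Qed.
Lemma min_lt_inv z x y : ER_lt z (ER_min x y) -> ER_lt z x /\ ER_lt z y.
Proof. intros H; split; eapply ER_lt_le_trans; eauto using min_le_l, min_le_r. Qed.
Lemma min_inf_r x : ER_min x ERinf = x.
Proof. dER x; reflexivity. Qed.
Lemma min_swap x y z : ER_min x (ER_min y z) = ER_min y (ER_min x z).
Proof.
  apply ER_le_antisym; repeat apply le_min;
  eauto using ER_le_trans, min_le_l, min_le_r.
Qed.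


Lemma Rdiv_nonneg r t : 0 <= r -> 0 < t -> 0 <= r / t.
Proof. intros; unfold Rdiv; apply Rmult_le_pos; auto; left; apply Rinv_0_lt_compat; auto. Qed.
Lemma Rdiv_mul r t : 0 < t -> r / t * t = r.
Proof. intros; field; lra. Qed.
Lemma Rmax0 t : 0 <= t -> Rmax 0 t = t.
Proof. intros; apply Rmax_right; auto. Qed.

Lemma nn_of_val' t : 0 <= t -> proj1_sig (nn_of t) = t.
Proof. apply nn_of_val. Qed.

Definition mn {T : Type} (nu : T -> ER) (L : list T) : ER :=
  fold_right (fun y acc => ER_min (nu y) acc) ERinf L.

Lemma mn_le_In {T} (nu : T -> ER) L y : In y L -> ER_le (mn nu L) (nu y).
Proof.
  induction L as [|z L IH]; unfold mn in *; cbn [fold_right] in *; [intros []|]. intros [->|H].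
  - apply min_le_l.
  - eapply ER_le_trans; [apply min_le_r|auto].
Qed.
Lemma mn_superadd {T} (nu nu' : T -> ER) L :
  ER_le (ER_add (mn nu L) (mn nu' L)) (mn (fun x => ER_add (nu x) (nu' x)) L).
Proof.
  induction L as [|z L IH]; unfold mn in *; cbn [fold_right] in *; [apply ER_le_inf|].
  apply le_min.
  - apply ER_add_mono; apply min_le_l.
  - eapply ER_le_trans; [|exact IH]. apply ER_add_mono; apply min_le_r.
Qed.
Lemma mn_scale {T} (t : nnR) (nu : T -> ER) L :
  ER_le (ER_scale t (mn nu L)) (mn (fun x => ER_scale t (nu x)) L).
Proof.
  induction L as [|z L IH]; unfold mn in *; cbn [fold_right] in *; [apply ER_le_inf|].
  apply le_min.
  - apply ER_scale_mono; apply min_le_l.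
  - eapply ER_le_trans; [|exact IH]. apply ER_scale_mono; apply min_le_r.
Qed.
Lemma mn_mono {T} (nu nu' : T -> ER) L : (forall x, ER_le (nu x) (nu' x)) -> ER_le (mn nu L) (mn nu' L).
Proof.
  intros H; induction L as [|z L IH]; unfold mn in *; cbn [fold_right] in *; [apply ER_le_refl|].
  apply le_min. eapply ER_le_trans; [apply min_le_l|auto].
  eapply ER_le_trans; [apply min_le_r|auto].
Qed.

Lemma ER_le_add_r x y : ER_le x (ER_add x y).
Proof. dER x; dER y; er_unf; auto; lra. Qed.

Lemma lub_scale {I : Type} (g : I -> ER) s t :
  is_lub ER_le g s -> is_lub ER_le (fun i => ER_scale t (g i)) (ER_scale t s).
Proof.
  intros [Hub Hl]; split.
  - intros i; apply ER_scale_mono; auto.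
  - intros u Hu. destruct (Req_EM_T (nnval t) 0) as [E|E].
    + rewrite ER_scale_zero by auto. dER u; er_unf; auto; lra.
    + assert (tp : 0 < nnval t) by (pose proof (nnpos t); lra).
      dER u; [|apply ER_le_inf].
      assert (Hs : ER_le s (ERfin (nn_of (r / nnval t)))).
      { apply Hl. intros i. specialize (Hu i). destruct t as [t ht]. simpl in tp.
        dER (g i); er_unf; [|destruct Req_EM_T; simpl in *; [lra|tauto]].
        pose proof (Rdiv_mul r t tp). pose proof (Rdiv_nonneg r t h tp).
        rewrite Rmax0 by auto. nra. }
      destruct t as [t ht]; simpl in tp. dER s; er_unf; [|tauto].
      pose proof (Rdiv_mul r t tp). pose proof (Rdiv_nonneg r t h tp).
      rewrite Rmax0 in Hs by auto. nra.
Qed.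

Lemma lub_add {I : Type} (g h : I -> ER) a b :
  (forall i j, exists k, ER_le (g i) (g k) /\ ER_le (h j) (h k)) ->
  is_lub ER_le g a -> is_lub ER_le h b ->
  is_lub ER_le (fun i => ER_add (g i) (h i)) (ER_add a b).
Proof.
  intros Hd [Hga Hgl] [Hha Hhl]; split.
  - intros i; apply ER_add_mono; auto.
  - intros u Hu. dER u; [|apply ER_le_inf].
    assert (Hij : forall i j, ER_le (ER_add (g i) (h j)) (ERfin (exist _ r h0))).
    { intros i j. destruct (Hd i j) as [k [H1 H2]]. eapply ER_le_trans; [|apply (Hu k)].
      apply ER_add_mono; auto. }
    destruct (classic (inhabited I)) as [[j0]|NI].
    +
      assert (Ha : forall j, ER_le (ER_add a (h j)) (ERfin (exist _ r h0))).
      { intros j. specialize (Hij j j) as Hjj.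
        destruct (h j) as [[v hv]|] eqn:Ehj; [|rewrite ER_add_inf_r in Hjj; simpl in Hjj; tauto].
        assert (ER_le a (ERfin (nn_of (r - v)))).
        { apply Hgl. intros i. specialize (Hij i j). rewrite Ehj in Hij.
          dER (g i); er_unf; [|tauto]. rewrite Rmax0; lra. }
        assert (v <= r) by (dER (g j); er_unf; [lra|tauto]).
        dER a; er_unf; [|tauto]. rewrite Rmax0 in H by lra. lra. }
      specialize (Ha j0) as Ha0. dER a; [|simpl in Ha0; tauto].
      assert (ER_le b (ERfin (nn_of (r - r0)))).
      { apply Hhl. intros j. specialize (Ha j). dER (h j); er_unf; [|tauto].
        rewrite Rmax0; lra. }
      assert (r0 <= r) by (specialize (Ha j0); dER (h j0); er_unf; [lra|tauto]).
      dER b; er_unf; [|tauto]. rewrite Rmax0 in H by lra. lra.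
    + assert (ER_le a (ERfin nn0)) by (apply Hgl; intros i; exfalso; apply NI; constructor; auto).
      assert (ER_le b (ERfin nn0)) by (apply Hhl; intros i; exfalso; apply NI; constructor; auto).
      dER a; dER b; er_unf; try tauto. lra.
Qed.

Section Dual.
Variable C : DCone.

Definition fadd (nu nu' : C -> ER) : C -> ER := fun x => ER_add (nu x) (nu' x).
Definition fscale (t : nnR) (nu : C -> ER) : C -> ER := fun x => ER_scale t (nu x).

Lemma in_dual_scale t nu : in_dual C nu -> in_dual C (fscale t nu).
Proof.
  intros [[Ha Hs] [Hm Hl]]; unfold fscale; split; [split|split].
  - intros x y; rewrite Ha; apply ER_scale_add.
  - intros r x; rewrite Hs; apply ER_scale_comm.
  - intros a a' H; apply ER_scale_mono; auto.
  - intros I f s Hd Hlub. apply lub_scale. apply (Hl I f s Hd Hlub).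
Qed.

Lemma in_dual_add nu nu' : in_dual C nu -> in_dual C nu' -> in_dual C (fadd nu nu').
Proof.
  intros [[Ha Hs] [Hm Hl]] [[Ha' Hs'] [Hm' Hl']]; unfold fadd; split; [split|split].
  - intros x y; rewrite Ha, Ha'.
    rewrite !ER_add_assoc. f_equal. rewrite <- !ER_add_assoc. f_equal. apply ER_add_comm.
  - intros r x; rewrite Hs, Hs'; symmetry; apply ER_scale_add.
  - intros a a' H; apply ER_add_mono; auto.
  - intros I f s Hd Hlub. apply lub_add.
    + intros i j. destruct Hd as [_ Hd]. destruct (Hd i j) as [k [H1 H2]].
      exists k; split; auto.
    + apply (Hl I f s Hd Hlub).
    + apply (Hl' I f s Hd Hlub).
Qed.

Lemma zero_le (y : C) : dle C (czero C) y.
Proof.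
  destruct (dsmul_scott C) as [Hm _].
  specialize (Hm (nn0, y) (nn1, y)). simpl in Hm.
  rewrite csmul_0, csmul_1 in Hm. apply Hm. split; simpl.
  unfold nn_le, nn0, nn1; simpl; lra. apply dle_refl.
Qed.

Lemma dadd_mono (x x' y y' : C) : dle C x x' -> dle C y y' -> dle C (cadd C x y) (cadd C x' y').
Proof.
  intros; destruct (dadd_scott C) as [Hm _]. apply (Hm (x, y) (x', y')). split; auto.
Qed.

Lemma dsmul_mono (t : nnR) (x y : C) : dle C x y -> dle C (csmul C t x) (csmul C t y).
Proof.
  intros; destruct (dsmul_scott C) as [Hm _]. apply (Hm (t, x) (t, y)). split; simpl; auto.
  unfold nn_le; lra.
Qed.

Lemma dual_mono nu x y : in_dual C nu -> dle C x y -> ER_le (nu x) (nu y).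
Proof. intros [_ [Hm _]] H; auto. Qed.

Lemma dual_zero nu : in_dual C nu -> nu (czero C) = ERfin nn0.
Proof.
  intros [[_ Hs] _]. rewrite <- (csmul_0 C (czero C)). rewrite Hs. apply ER_scale_zero. reflexivity.
Qed.

End Dual.

Section Approx.
Variable C : DCone.
Variable C0 : C -> Prop.
Variable mu : C -> ER.
Hypothesis Hmu : in_dual C mu.

Definition Qa (y : C) : Prop := forall r : nnR, ER_lt (ERfin r) (mu y) ->
  exists z, C0 z /\ dle C z y /\ ER_lt (ERfin r) (mu z).

Lemma approx (Hd : d_dense C C0) : forall y, Qa y.
Proof.
  destruct Hd as [[H0 [Hadd Hsm]] Hd]. apply Hd.
  2:{ intros x Hx r Hr. exists x; split; auto; split; auto. apply dle_refl. }
  destruct Hmu as [[Hla Hls] [Hmm Hml]].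
  split; [split; [|split]|].
  - intros r Hr. rewrite (dual_zero C mu Hmu) in Hr. destruct r as [r hr]; er_unf. lra.
  - intros x y Qx Qy r Hr. rewrite Hla in Hr.
    assert (Hyxy : dle C y (cadd C x y)).
    { pose proof (dadd_mono C _ _ _ _ (zero_le C x) (dle_refl C y)) as H. rewrite cadd_0 in H; auto. }
    assert (Hxxy : dle C x (cadd C x y)).
    { pose proof (dadd_mono C _ _ _ _ (dle_refl C x) (zero_le C y)) as H.
      rewrite (cadd_comm _ x (czero C)), cadd_0 in H; auto. }
    destruct (classic (ER_le (mu y) (ERfin r))) as [Hby|Hby];
      [|destruct (Qy r (ER_not_le _ _ Hby)) as [z [? [? ?]]]; exists z; split; auto; split; auto;
        eapply dle_trans; eauto].
    destruct (classic (ER_le (mu x) (ERfin r))) as [Hbx|Hbx];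
      [|destruct (Qx r (ER_not_le _ _ Hbx)) as [z [? [? ?]]]; exists z; split; auto; split; auto;
        eapply dle_trans; eauto].
    destruct (mu x) as [[a ha]|] eqn:Ex; [|simpl in Hbx; tauto].
    destruct (mu y) as [[b hb]|] eqn:Ey; [|simpl in Hby; tauto].
    destruct r as [r hr]. er_unf.
    destruct (Qx (nn_of ((a - b + r)/2))) as [z1 [Hz1 [Hz1x Hz1m]]].
    { rewrite Ex. er_unf. rewrite Rmax0 by lra. lra. }
    destruct (Qy (nn_of ((b - a + r)/2))) as [z2 [Hz2 [Hz2x Hz2m]]].
    { rewrite Ey. er_unf. rewrite Rmax0 by lra. lra. }
    exists (cadd C z1 z2); split; auto; split. apply dadd_mono; auto.
    rewrite Hla. destruct (mu z1) as [[c1 hc1]|]; destruct (mu z2) as [[c2 hc2]|]; er_unf; try tauto.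
    rewrite Rmax0 in * by lra. lra.
  - intros t y Qy r Hr. rewrite Hls in Hr.
    destruct t as [t ht]. destruct (Req_EM_T t 0) as [E|E].
    { rewrite ER_scale_zero in Hr by auto. destruct r as [r hr]; er_unf; lra. }
    assert (tp : 0 < t) by lra.
    destruct r as [r hr].
    destruct (Qy (nn_of (r / t))) as [z [Hz [Hzy Hzm]]].
    { pose proof (Rdiv_mul r t tp). pose proof (Rdiv_nonneg r t hr tp).
      destruct (mu y) as [[b hb]|]; er_unf; try destruct Req_EM_T; simpl in *; try lra; auto.
      rewrite Rmax0 by auto. split; [nra|intro; nra]. }
    exists (csmul C (exist _ t ht) z); split; auto; split. apply dsmul_mono; auto.
    rewrite Hls. pose proof (Rdiv_mul r t tp). pose proof (Rdiv_nonneg r t hr tp).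
    destruct (mu z) as [[b hb]|]; er_unf; try destruct Req_EM_T; simpl in *; try lra; auto.
    rewrite Rmax0 in * by auto. split; [nra|intro; nra].
  - intros I f s Hdir HQ Hlub r Hr.
    pose proof (Hml I f s Hdir Hlub) as [_ Hl].
    destruct (classic (exists i, ~ ER_le (mu (f i)) (ERfin r))) as [[i Hi]|Hn].
    + destruct (HQ i r (ER_not_le _ _ Hi)) as [z [? [? ?]]]. exists z; split; auto; split; auto.
      eapply dle_trans; eauto. destruct Hlub as [Hub _]. apply Hub.
    + exfalso. apply (ER_lt_not_le _ _ Hr). apply Hl. intros i. apply NNPP; intro; apply Hn; eauto.
Qed.
End Approx.

Lemma comb2 al be (b b' : nnR) : 0 <= al -> 0 <= be ->
  ER_add (ER_scale (nn_of al) (ERfin b)) (ER_scale (nn_of be) (ERfin b')) =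
  ERfin (nn_of (al * nnval b + be * nnval b')).
Proof.
  intros. destruct b as [b hb], b' as [b' hb']. simpl. f_equal. apply nn_ext.
  unfold nn_add, nn_mul, nnval, nn_of; simpl. rewrite !Rmax0; auto. nra.
Qed.

Lemma small_pos s d u : 0 < s -> 0 <= d -> 0 < u -> exists del, 0 < del /\ del <= u /\ del * d < s.
Proof.
  intros. exists (Rmin u (s / (2 * (d + 1)))). split; [apply Rmin_pos; auto; apply Rdiv_lt_0_compat; lra|].
  split; [apply Rmin_l|].
  pose proof (Rmin_r u (s / (2 * (d + 1)))). pose proof (Rdiv_mul s (2*(d+1)) ltac:(lra)).
  pose proof (Rmin_pos u (s / (2 * (d + 1))) H1 ltac:(apply Rdiv_lt_0_compat; lra)).
  set (m := Rmin u (s / (2 * (d + 1)))) in *. set (q := s / (2 * (d + 1))) in *. nra.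
Qed.

Section Merge.
Variable C : DCone.
Variable phi : (C -> ER) -> ER.
Hypothesis Hsub : sublinear_dual C phi.

Lemma phi_scale t nu : in_dual C nu -> phi (fscale C t nu) = ER_scale t (phi nu).
Proof. intros; exact (proj1 Hsub t nu H). Qed.

Lemma phi_add nu nu' : in_dual C nu -> in_dual C nu' ->
  ER_le (phi (fadd C nu nu')) (ER_add (phi nu) (phi nu')).
Proof. intros; exact (proj2 Hsub nu nu' H H0). Qed.

Lemma phi_comb al be nu nu' : in_dual C nu -> in_dual C nu' ->
  ER_le (phi (fadd C (fscale C al nu) (fscale C be nu')))
        (ER_add (ER_scale al (phi nu)) (ER_scale be (phi nu'))).
Proof.
  intros. rewrite <- (phi_scale al nu), <- (phi_scale be nu') by auto.
  apply phi_add; apply in_dual_scale; auto.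
Qed.

Variables (y y' : C) (L : list C).

Hypothesis Hyp : forall nu, in_dual C nu -> ER_le (mn nu (y :: y' :: L)) (phi nu).

Definition cc (lam : R) : C :=
  cadd C (csmul C (nn_of lam) y) (csmul C (nn_of (1 - lam)) y').

Lemma cc_val lam nu : in_dual C nu ->
  nu (cc lam) = ER_add (ER_scale (nn_of lam) (nu y)) (ER_scale (nn_of (1 - lam)) (nu y')).
Proof. intros [[Ha Hs] _]. unfold cc. rewrite Ha, !Hs. reflexivity. Qed.

Lemma small_t p q m : ER_lt (ERfin p) m -> exists t, 0 < t /\
   ER_lt (ER_add (ERfin p) (ER_scale (nn_of t) (ERfin q))) m.
Proof.
  intros H. destruct m as [[s hs]|].
  - destruct p as [p hp], q as [q hq]; unfold ER_lt, ER_le, nn_le in H; simpl in H.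
    destruct (small_pos (s - p) q 1) as [t [? [? ?]]]; try lra.
    exists t; split; auto. unfold ER_lt, ER_le, nn_le, nn_add, nn_mul; simpl. rewrite Rmax0 by lra. lra.
  - exists 1; split; [lra|]. split; [apply ER_le_inf|]. simpl; auto.
Qed.

Lemma drop (z w : C) nu0 : in_dual C nu0 -> phi nu0 <> ERinf -> nu0 w = ERinf ->
  (forall nu, in_dual C nu -> ER_le (ER_min (nu w) (ER_min (nu z) (mn nu L))) (phi nu)) ->
  forall nu, in_dual C nu -> ER_le (ER_min (nu z) (mn nu L)) (phi nu).
Proof.
  intros H0 Hf0 Hw H nu Hnu. apply NNPP; intro Hn. apply ER_not_le in Hn.
  destruct (phi nu) as [p|] eqn:Ep; [|destruct Hn as [_ Hn]; apply Hn, ER_le_inf].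
  destruct (phi nu0) as [q|] eqn:Eq; [|congruence].
  destruct (small_t p q _ Hn) as [t [tp Ht]].
  set (nu1 := fadd C nu (fscale C (nn_of t) nu0)).
  assert (Hd1 : in_dual C nu1) by (apply in_dual_add; auto; apply in_dual_scale; auto).
  assert (Hp1 : ER_le (phi nu1) (ER_add (ERfin p) (ER_scale (nn_of t) (ERfin q)))).
  { rewrite <- Ep, <- Eq, <- phi_scale by auto. apply phi_add; auto. apply in_dual_scale; auto. }
  specialize (H nu1 Hd1).
  assert (Hw1 : nu1 w = ERinf).
  { unfold nu1, fadd, fscale. rewrite Hw, ER_scale_inf, ER_add_inf_r; auto.
    rewrite nn_of_val; lra. }
  rewrite Hw1 in H. simpl ER_min in H.
  assert (ER_le (ER_min (nu z) (mn nu L)) (ER_min (nu1 z) (mn nu1 L))).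
  { apply le_min. eapply ER_le_trans; [apply min_le_l|]. apply ER_le_add_r.
    eapply ER_le_trans; [apply min_le_r|]. apply mn_mono. intros; apply ER_le_add_r. }
  apply (ER_lt_irrefl (phi nu1)).
  eapply ER_le_lt_trans; [exact Hp1|]. eapply ER_lt_le_trans; [exact Ht|].
  eapply ER_le_trans; [exact H1|]. exact H.
Qed.


Lemma mn_cons (nu : C -> ER) x l : mn nu (x :: l) = ER_min (nu x) (mn nu l).
Proof. reflexivity. Qed.

Lemma lt_fin X Y : 0 <= X -> X < Y -> ER_lt (ERfin (nn_of X)) (ERfin (nn_of Y)).
Proof. intros. unfold ER_lt, ER_le, nn_le, nnval, nn_of; simpl. rewrite !Rmax0 by lra. lra. Qed.

Lemma lt_comb al be p p' A A' : 0 < al -> 0 < be -> ER_lt (ERfin p) A -> ER_lt (ERfin p') A' ->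
  ER_lt (ERfin (nn_of (al * nnval p + be * nnval p'))) (ER_add (ER_scale (nn_of al) A) (ER_scale (nn_of be) A')).
Proof.
  intros Ha Hb HA HA'. pose proof (nnpos p). pose proof (nnpos p').
  destruct A as [a|]; destruct A' as [a'|].
  - rewrite comb2 by lra. apply lt_fin. nra.
    destruct a as [a ha], a' as [a' ha'], p as [p hp], p' as [p' hp'].
    unfold ER_lt, ER_le, nn_le in HA, HA'; simpl in *. nra.
  - rewrite (ER_scale_inf (nn_of be)), ER_add_inf_r by (rewrite nn_of_val; lra).
    split; [apply ER_le_inf|]; simpl; auto.
  - rewrite (ER_scale_inf (nn_of al)), ER_add_inf_l by (rewrite nn_of_val; lra).
    split; [apply ER_le_inf|]; simpl; auto.
  - rewrite (ER_scale_inf (nn_of al)), ER_add_inf_l by (rewrite nn_of_val; lra).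
    split; [apply ER_le_inf|]; simpl; auto.
Qed.

Definition WA lam := exists nu (p b c : nnR), in_dual C nu /\ phi nu = ERfin p /\ nu y = ERfin b /\ nu y' = ERfin c /\ ER_lt (ERfin p) (mn nu L) /\ nnval c <= nnval p /\ nnval p < lam * nnval b + (1 - lam) * nnval c.
Definition WB lam := exists nu (p b c : nnR), in_dual C nu /\ phi nu = ERfin p /\ nu y = ERfin b /\ nu y' = ERfin c /\ ER_lt (ERfin p) (mn nu L) /\ nnval b <= nnval p /\ nnval p < lam * nnval b + (1 - lam) * nnval c.

Lemma monoB lam lam' : 0 <= lam' <= lam -> lam <= 1 -> WB lam -> WB lam'.
Proof.
  intros Hl Hl1 [nu [p [b [c [? [? [? [? [? [H1 H2]]]]]]]]]].
  exists nu, p, b, c; repeat (split; auto).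
  pose proof (nnpos p); pose proof (nnpos b); pose proof (nnpos c).
  assert (nnval b < nnval c) by nra.
  assert (0 <= (lam - lam') * (nnval c - nnval b)) by (apply Rmult_le_pos; lra). nra.
Qed.

Lemma openA lam : 0 <= lam <= 1 -> WA lam -> exists del, 0 < del /\ del <= lam /\ WA (lam - del).
Proof.
  intros Hl [nu [p [b [c [? [? [? [? [? [H1 H2]]]]]]]]]].
  pose proof (nnpos p); pose proof (nnpos b); pose proof (nnpos c).
  assert (0 < lam /\ nnval c < nnval b) as [Hl0 Hbc] by (split; nra).
  destruct (small_pos (lam * nnval b + (1 - lam) * nnval c - nnval p) (nnval b - nnval c) lam)
    as [del [? [? ?]]]; try lra.
  exists del; split; auto; split; auto. exists nu, p, b, c; repeat (split; auto). nra.
Qed.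

Lemma openB lam : 0 <= lam <= 1 -> WB lam -> lam < 1 /\ exists del, 0 < del /\ lam + del <= 1 /\ WB (lam + del).
Proof.
  intros Hl [nu [p [b [c [? [? [? [? [? [H1 H2]]]]]]]]]].
  pose proof (nnpos p); pose proof (nnpos b); pose proof (nnpos c).
  assert (lam < 1 /\ nnval b < nnval c) as [Hl0 Hbc] by (split; nra).
  split; auto.
  destruct (small_pos (lam * nnval b + (1 - lam) * nnval c - nnval p) (nnval c - nnval b) (1 - lam))
    as [del [? [? ?]]]; try lra.
  exists del; split; auto; split; [lra|]. exists nu, p, b, c; repeat (split; auto). nra.
Qed.

Lemma excl lam : 0 <= lam <= 1 -> WA lam -> WB lam -> False.
Proof.
  intros Hl [nu [p [b [c [Hd [Ep [Eb [Ec [Ha [H1 H2]]]]]]]]]]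
    [nu' [p' [b' [c' [Hd' [Ep' [Eb' [Ec' [Ha' [H1' H2']]]]]]]]]].
  pose proof (nnpos p); pose proof (nnpos b); pose proof (nnpos c).
  pose proof (nnpos p'); pose proof (nnpos b'); pose proof (nnpos c').
  set (db := nnval b - nnval p). set (dc := nnval c - nnval p).
  set (db' := nnval b' - nnval p'). set (dc' := nnval c' - nnval p').
  assert (h1 : lam * db + (1 - lam) * dc > 0) by (unfold db, dc; nra).
  assert (h2 : lam * db' + (1 - lam) * dc' > 0) by (unfold db', dc'; nra).
  assert (hdc : dc <= 0) by (unfold dc; lra). assert (hdb' : db' <= 0) by (unfold db'; lra).
  assert (Hdc' : 0 < dc') by nra.
  assert (Hdb : 0 < db) by nra.
  set (D := db * dc' - dc * db').
  assert (HD : 0 < D).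
  { assert (lam * db > (1 - lam) * (- dc)) by lra.
    assert ((1 - lam) * dc' > lam * (- db')) by lra.
    assert (0 < lam) by nra. assert (lam < 1) by nra.
    assert (HA' : 0 < (1 - lam) * dc') by nra.
    assert (HB : 0 <= (1 - lam) * (- dc)) by nra.
    assert (HB' : 0 <= lam * (- db')) by nra.
    assert (P1 : (lam * db) * ((1 - lam) * dc') > ((1 - lam) * (- dc)) * ((1 - lam) * dc'))
      by (apply Rmult_lt_compat_r; lra).
    assert (P2 : ((1 - lam) * (- dc)) * ((1 - lam) * dc') >= ((1 - lam) * (- dc)) * (lam * (- db')))
      by (apply Rle_ge, Rmult_le_compat_l; lra).
    assert (lam * (1 - lam) * (db * dc') > lam * (1 - lam) * (dc * db')).
    { replace (lam * (1 - lam) * (db * dc')) with ((lam * db) * ((1 - lam) * dc')) by ring.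
      replace (lam * (1 - lam) * (dc * db')) with (((1 - lam) * (- dc)) * (lam * (- db'))) by ring. lra. }
    assert (0 < lam * (1 - lam)) by nra.
    unfold D. nra. }
  set (al := dc' * (1 - db')). set (be := - dc * (1 - db') + D).
  assert (Hal : 0 < al) by (unfold al; nra). assert (Hbe : 0 < be) by (unfold be; nra).
  set (nu2 := fadd C (fscale C (nn_of al) nu) (fscale C (nn_of be) nu')).
  assert (Hd2 : in_dual C nu2) by (apply in_dual_add; apply in_dual_scale; auto).
  assert (Hphi : ER_le (phi nu2) (ERfin (nn_of (al * nnval p + be * nnval p')))).
  { rewrite <- comb2 by lra. rewrite <- Ep, <- Ep'. apply phi_comb; auto. }
  assert (Hy : nu2 y = ERfin (nn_of (al * nnval b + be * nnval b'))).
  { unfold nu2, fadd, fscale. rewrite Eb, Eb'. apply comb2; lra. }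
  assert (Hy' : nu2 y' = ERfin (nn_of (al * nnval c + be * nnval c'))).
  { unfold nu2, fadd, fscale. rewrite Ec, Ec'. apply comb2; lra. }
  assert (HL : ER_lt (ERfin (nn_of (al * nnval p + be * nnval p'))) (mn nu2 L)).
  { eapply ER_lt_le_trans; [|apply mn_superadd].
    eapply ER_lt_le_trans; [|apply ER_add_mono; apply mn_scale].
    apply lt_comb; auto. }
  assert (E1 : al * nnval b + be * nnval b' - (al * nnval p + be * nnval p') = D).
  { unfold al, be, D, db, dc, db', dc'. ring. }
  assert (E2 : al * nnval c + be * nnval c' - (al * nnval p + be * nnval p') = D * dc').
  { unfold al, be, D, db, dc, db', dc'. ring. }
  specialize (Hyp nu2 Hd2). rewrite !mn_cons, Hy, Hy' in Hyp.
  apply (ER_lt_irrefl (phi nu2)). eapply ER_le_lt_trans; [exact Hphi|].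
  eapply ER_lt_le_trans; [|exact Hyp].
  apply lt_min; [apply lt_fin; nra|]. apply lt_min; auto. apply lt_fin; nra.
Qed.


Lemma viol (Fin : forall nu, in_dual C nu -> phi nu <> ERinf -> nu y <> ERinf /\ nu y' <> ERinf)
  lam nu : 0 <= lam <= 1 -> in_dual C nu -> ~ ER_le (mn nu (cc lam :: L)) (phi nu) -> WA lam \/ WB lam.
Proof.
  intros Hl Hd Hn. apply ER_not_le in Hn. rewrite mn_cons in Hn.
  destruct (min_lt_inv _ _ _ Hn) as [Hc HL].
  destruct (phi nu) as [p|] eqn:Ep; [|exfalso; destruct Hc as [_ Hc]; apply Hc, ER_le_inf].
  destruct (Fin nu Hd) as [Fb Fc]; [rewrite Ep; discriminate|].
  destruct (nu y) as [b|] eqn:Eb; [|congruence].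
  destruct (nu y') as [c|] eqn:Ec; [|congruence].
  rewrite cc_val, Eb, Ec, comb2 in Hc by (auto; lra).
  pose proof (nnpos p); pose proof (nnpos b); pose proof (nnpos c).
  assert (Hc' : nnval p < lam * nnval b + (1 - lam) * nnval c).
  { unfold ER_lt, ER_le, nn_le, nn_of in Hc; simpl in Hc. unfold nnval in *.
    rewrite Rmax0 in Hc by nra. lra. }
  specialize (Hyp nu Hd). rewrite !mn_cons, Eb, Ec, Ep in Hyp.
  destruct (Rle_dec (nnval c) (nnval p)).
  { left. exists nu, p, b, c; repeat (split; auto). }
  destruct (Rle_dec (nnval b) (nnval p)).
  { right. exists nu, p, b, c; repeat (split; auto). }
  exfalso. apply (ER_lt_irrefl (ERfin p)). eapply ER_lt_le_trans; [|exact Hyp].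
  apply lt_min; [|apply lt_min; auto];
  destruct p, b, c; unfold ER_lt, ER_le, nn_le; simpl in *; lra.
Qed.

Lemma merge3 (Fin : forall nu, in_dual C nu -> phi nu <> ERinf -> nu y <> ERinf /\ nu y' <> ERinf) :
  exists lam, 0 <= lam <= 1 /\ forall nu, in_dual C nu -> ER_le (mn nu (cc lam :: L)) (phi nu).
Proof.
  set (E := fun l => l = 0 \/ (0 <= l <= 1 /\ WB l)).
  destruct (completeness E) as [m [Hub Hlub]].
  { exists 1. intros l [->|[? ?]]; lra. }
  { exists 0; left; auto. }
  assert (m0 : 0 <= m) by (apply Hub; left; auto).
  assert (m1 : m <= 1) by (apply Hlub; intros l [->|[? ?]]; lra).
  assert (nB : ~ WB m).
  { intro HB. destruct (openB m) as [_ [del [? [? ?]]]]; auto.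
    assert (m + del <= m) by (apply Hub; right; split; [lra|auto]). lra. }
  assert (nA : ~ WA m).
  { intro HA. destruct (openA m) as [del [? [? ?]]]; auto.
    assert (exists l, E l /\ m - del < l) as [l [El Hl]].
    { apply NNPP; intro N. assert (m <= m - del).
      { apply Hlub. intros l El. apply Rnot_lt_le; intro; apply N; eauto. }
      lra. }
    destruct El as [->|[Hl01 HBl]]; [lra|].
    apply (excl (m - del)); [lra|auto|]. apply (monoB l); auto; lra. }
  exists m; split; [lra|]. intros nu Hd. apply NNPP; intro Hn.
  destruct (viol Fin m nu) as [?|?]; auto.
Qed.

Lemma ER_scale_one t x : nnval t = 1 -> ER_scale t x = x.
Proof.
  destruct t as [t ht]; simpl; intros ->. destruct x as [[x hx]|]; simpl.
  - f_equal; apply nn_ext; simpl; ring.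
  - destruct Req_EM_T; auto; simpl in *; lra.
Qed.

Lemma ER_add_zero x : ER_add (ERfin nn0) x = x.
Proof. destruct x as [[x hx]|]; simpl; auto. f_equal; apply nn_ext; simpl; ring. Qed.

Lemma merge : exists lam, 0 <= lam <= 1 /\ forall nu, in_dual C nu -> ER_le (mn nu (cc lam :: L)) (phi nu).
Proof.
  destruct (classic (exists nu0, in_dual C nu0 /\ phi nu0 <> ERinf /\ nu0 y = ERinf)) as [[nu0 [H1 [H2 H3]]]|N1].
  { exists 0. split; [lra|]. intros nu Hd. rewrite mn_cons, cc_val by auto.
    rewrite ER_scale_zero by (apply nn_of_val; lra). rewrite ER_add_zero.
    rewrite ER_scale_one by (rewrite nn_of_val; lra).
    apply (drop y' y nu0); auto. }
  destruct (classic (exists nu0, in_dual C nu0 /\ phi nu0 <> ERinf /\ nu0 y' = ERinf)) as [[nu0 [H1 [H2 H3]]]|N2].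
  { exists 1. split; [lra|]. intros nu Hd. rewrite mn_cons, cc_val by auto.
    rewrite (ER_scale_zero (nn_of (1 - 1))) by (rewrite nn_of_val; lra).
    rewrite ER_add_comm, ER_add_zero.
    rewrite ER_scale_one by (rewrite nn_of_val; lra).
    apply (drop y y' nu0); auto. intros nu' Hd'. rewrite min_swap. apply Hyp; auto. }
  apply merge3. intros nu Hd Hf. split; intro E; [apply N1|apply N2]; eauto.
Qed.

End Merge.

Lemma ERfin_nn_of (p : nnR) : ERfin p = ERfin (nn_of (nnval p)).
Proof. f_equal; apply nn_ext; rewrite nn_of_val; auto; apply nnpos. Qed.

Definition mid (s : R) (m : ER) : R :=
  match m with ERfin t => (s + nnval t) / 2 | ERinf => s + 1 end.

Lemma mid_facts s m : 0 <= s -> ER_lt (ERfin (nn_of s)) m ->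
  s < mid s m /\ ER_lt (ERfin (nn_of (mid s m))) m.
Proof.
  intros Hs H. destruct m as [[t ht]|]; simpl.
  - unfold ER_lt, ER_le, nn_le, nn_of in *; simpl in *. rewrite Rmax0 in * by lra.
    lra.
  - split; [lra|]. split; [apply ER_le_inf|simpl; auto].
Qed.

Lemma conv_gt r a b lam : 0 <= lam <= 1 -> ER_lt (ERfin r) a -> ER_lt (ERfin r) b ->
  ER_lt (ERfin r) (ER_add (ER_scale (nn_of lam) a) (ER_scale (nn_of (1 - lam)) b)).
Proof.
  intros Hl Ha Hb. pose proof (nnpos r).
  destruct (Req_EM_T lam 0) as [E0|E0].
  { subst. rewrite ER_scale_zero by (apply nn_of_val; lra). rewrite ER_add_zero.
    rewrite ER_scale_one by (rewrite nn_of_val; lra). auto. }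
  destruct (Req_EM_T lam 1) as [E1|E1].
  { subst. rewrite (ER_scale_zero (nn_of (1 - 1))) by (rewrite nn_of_val; lra).
    rewrite ER_add_comm, ER_add_zero. rewrite ER_scale_one by (rewrite nn_of_val; lra). auto. }
  destruct a as [a|]; [|rewrite ER_scale_inf, ER_add_inf_l by (rewrite nn_of_val; lra);
     split; [apply ER_le_inf|simpl; auto]].
  destruct b as [b|]; [|rewrite (ER_scale_inf (nn_of (1 - lam))), ER_add_inf_r by (rewrite nn_of_val; lra);
     split; [apply ER_le_inf|simpl; auto]].
  rewrite comb2 by lra. pose proof (nnpos a); pose proof (nnpos b).
  destruct r as [r hr], a as [a ha], b as [b hb];
  unfold ER_lt, ER_le, nn_le, nn_of in *; simpl in *. rewrite Rmax0 by nra. nra.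
Qed.

Lemma scale_gt (r : nnR) rp m : 0 < nnval r -> 0 < rp -> ER_lt (ERfin (nn_of rp)) m ->
  ER_lt (ERfin r) (ER_scale (nn_of (nnval r / rp)) m).
Proof.
  intros Hr Hrp H. pose proof (Rdiv_mul (nnval r) rp Hrp). pose proof (Rdiv_lt_0_compat _ _ Hr Hrp).
  destruct m as [[t ht]|].
  - destruct r as [r hr]; unfold ER_lt, ER_le, nn_le, nn_mul, nn_of in *; simpl in *.
    rewrite Rmax0 in * by lra. split; intros; nra.
  - rewrite ER_scale_inf by (rewrite nn_of_val; lra). split; [apply ER_le_inf|simpl; auto].
Qed.

Lemma scale_transfer (r : nnR) rp q' s X : 0 < nnval r -> 0 < rp -> 0 < q' -> s < rp ->
  ER_lt (ERfin (nn_of q')) (ER_scale (nn_of (nnval r / rp)) X) ->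
  ER_lt (ERfin (nn_of s)) (ER_scale (nn_of (nnval r / q')) X).
Proof.
  intros Hr Hrp Hq Hs H.
  pose proof (Rdiv_mul (nnval r) rp Hrp). pose proof (Rdiv_lt_0_compat _ _ Hr Hrp).
  pose proof (Rdiv_mul (nnval r) q' Hq). pose proof (Rdiv_lt_0_compat _ _ Hr Hq).
  destruct X as [[t ht]|].
  - destruct r as [r hr]; unfold ER_lt, ER_le, nn_le, nn_mul, nn_of in *; simpl in *.
    rewrite !Rmax0 in * by lra. set (k := r / rp) in *. set (t' := r / q') in *.
    assert (r * t > q' * rp) by nra.
    rewrite (Rmax0 t') by lra.
    assert (t' * t * q' > rp * q') by (replace (t' * t * q') with ((t' * q') * t) by ring; nra).
    assert (t' * t > rp) by (apply (Rmult_lt_reg_r q'); lra).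
    destruct (Rle_dec 0 s).
    + rewrite Rmax0 by lra. split; intros; lra.
    + rewrite Rmax_left by lra. split; intros; nra.
  - rewrite ER_scale_inf by (rewrite nn_of_val; lra). split; [apply ER_le_inf|simpl; auto].
Qed.

Section Main.
Variable C : DCone.
Variable C0 : C -> Prop.
Hypothesis Hdd : d_dense C C0.
Variable phi : (C -> ER) -> ER.
Hypothesis Hsub : sublinear_dual C phi.
Hypothesis Hlsc : weak_lsc C phi.
Variable mu : C -> ER.
Hypothesis Hmu : in_dual C mu.

Definition Inv (r : nnR) (L : list C) :=
  (forall nu, in_dual C nu -> ER_le (mn nu L) (phi nu)) /\ (forall z, In z L -> ER_lt (ERfin r) (mu z)).

Lemma collapse r : forall L y, Inv r (y :: L) -> exists z, Inv r (z :: nil).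
Proof.
  induction L as [|y' L IH]; intros y HI; [eauto|].
  destruct HI as [H1 H2].
  destruct (merge C phi Hsub y y' L H1) as [lam [Hl Hm]].
  apply (IH (cc C y y' lam)). split; auto.
  intros z [<-|Hz]; [|apply H2; simpl; auto].
  rewrite cc_val by auto. apply conv_gt; auto; apply H2; simpl; auto.
Qed.

Definition rp (p : C * nnR) : R := mid (nnval (snd p)) (mu (fst p)).
Definition yp (r : nnR) (p : C * nnR) : C := csmul C (nn_of (nnval r / rp p)) (fst p).

Lemma initL (r : nnR) : 0 < nnval r -> ER_lt (ERfin r) (phi mu) -> exists y L, Inv r (y :: L).
Proof.
  intros Hr Hphi.
  destruct (Hlsc r mu Hmu Hphi) as [l [Hl1 Hl2]].
  assert (Hrp : forall p, In p l -> nnval (snd p) < rp p /\ ER_lt (ERfin (nn_of (rp p))) (mu (fst p))).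
  { intros p Hp. unfold rp. apply mid_facts; [apply nnpos|]. rewrite <- ERfin_nn_of. auto. }
  assert (HInv : Inv r (map (yp r) l)).
  { split.
    - intros nu Hnu. apply NNPP; intro Hn. apply ER_not_le in Hn.
      destruct (phi nu) as [q|] eqn:Eq; [|destruct Hn as [_ Hn]; apply Hn, ER_le_inf].
      rewrite ERfin_nn_of in Hn. destruct (mid_facts _ _ (nnpos q) Hn) as [Hq1 Hq2].
      set (q' := mid (nnval q) (mn nu (map (yp r) l))) in *.
      assert (Hq' : 0 < q') by (pose proof (nnpos q); lra).
      set (nu1 := fscale C (nn_of (nnval r / q')) nu).
      assert (Hd1 : in_dual C nu1) by (apply in_dual_scale; auto).
      assert (Hgt := Hl2 nu1 Hd1).
      assert (ER_lt (ERfin r) (phi nu1)).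
      { apply Hgt. intros p Hp. destruct (Hrp p Hp) as [Hp1 Hp2].
        assert (Hm : ER_le (mn nu (map (yp r) l)) (nu (yp r p))) by (apply mn_le_In, in_map; auto).
        assert (Hlt := ER_lt_le_trans _ _ _ Hq2 Hm).
        destruct Hnu as [[_ Hs] _]. unfold yp in Hlt. rewrite Hs in Hlt.
        rewrite ERfin_nn_of. unfold nu1, fscale.
        pose proof (nnpos (snd p)).
        apply (scale_transfer r (rp p) q'); auto; lra. }
      unfold nu1 in H. rewrite phi_scale, Eq in H by auto.
      pose proof (Rdiv_mul (nnval r) q' Hq'). pose proof (Rdiv_lt_0_compat _ _ Hr Hq').
      pose proof (nnpos q).
      destruct r as [r hr], q as [q hq]; unfold ER_lt, ER_le, nn_le, nn_mul, nn_of in *; simpl in *.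
      rewrite Rmax0 in H by lra. destruct H as [_ H]. apply H.
      set (t := r / q') in *. nra.
    - intros z Hz. apply in_map_iff in Hz. destruct Hz as [p [<- Hp]].
      destruct (Hrp p Hp) as [Hp1 Hp2]. unfold yp. destruct Hmu as [[_ Hs] _]. rewrite Hs.
      apply scale_gt; auto. pose proof (nnpos (snd p)); lra. }
  destruct (map (yp r) l) as [|y L] eqn:EL.
  - exfalso. assert (Hz : ER_lt (ERfin r) (phi (fscale C nn0 mu))).
    { apply Hl2; [apply in_dual_scale; auto|]. intros p Hp. destruct l; simpl in *; [tauto|discriminate]. }
    rewrite phi_scale, ER_scale_zero in Hz by auto.
    destruct r as [r hr]; unfold ER_lt, ER_le, nn_le in Hz; simpl in *; lra.
  - eauto.
Qed.

Lemma main (r : nnR) : 0 < nnval r -> ER_lt (ERfin r) (phi mu) ->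
  exists x, C0 x /\ (forall nu, in_dual C nu -> ER_le (nu x) (phi nu)) /\ ER_lt (ERfin r) (mu x).
Proof.
  intros Hr Hphi. destruct (initL r Hr Hphi) as [y [L HI]].
  destruct (collapse r L y HI) as [z [Hz1 Hz2]].
  destruct (approx C C0 mu Hmu Hdd z r (Hz2 z (or_introl eq_refl))) as [x [Hx0 [Hxz Hxm]]].
  exists x; split; auto; split; auto.
  intros nu Hnu. eapply ER_le_trans; [apply (dual_mono C nu x z Hnu Hxz)|].
  specialize (Hz1 nu Hnu). rewrite mn_cons in Hz1. unfold mn in Hz1; simpl in Hz1.
  rewrite min_inf_r in Hz1. auto.
Qed.

End Main.

Theorem corollary5p3 (C : DCone) (C0 : C -> Prop) :
  d_dense C C0 ->
  forall phi : (C -> ER) -> ER,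
    sublinear_dual C phi -> weak_lsc C phi ->
    forall mu : C -> ER, in_dual C mu ->
      ER_is_sup
        (fun v => exists x, C0 x /\
                   (forall nu, in_dual C nu -> ER_le (nu x) (phi nu)) /\
                   v = mu x)
        (phi mu).
Proof.
  intros Hdd phi Hsub Hlsc mu Hmu. split.
  - intros v [x [_ [Hx ->]]]. apply Hx; auto.
  - intros u Hu. apply NNPP; intro Hn. apply ER_not_le in Hn.
    destruct u as [s|]; [|destruct Hn as [_ Hn]; apply Hn, ER_le_inf].
    rewrite ERfin_nn_of in Hn. destruct (mid_facts _ _ (nnpos s) Hn) as [H1 H2].
    pose proof (nnpos s).
    destruct (main C C0 Hdd phi Hsub Hlsc mu Hmu (nn_of (mid (nnval s) (phi mu)))) as [x [Hx0 [Hx1 Hx2]]];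
      auto.
    { rewrite nn_of_val; lra. }
    assert (Hle := Hu (mu x) (ex_intro _ x (conj Hx0 (conj Hx1 eq_refl)))).
    apply (ER_lt_irrefl (mu x)). eapply ER_le_lt_trans; [exact Hle|].
    eapply ER_le_lt_trans; [|exact Hx2].
    destruct s as [s hs]; unfold ER_le, nn_le, nn_of; simpl in *. rewrite Rmax0; lra.
Qed.
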